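(* Let $n\ge1$, let $\Sigma$ be a finite alphabet and ${\it td}>0$ with $T=\lfloor n\cdot{\it td}\rfloor$ satisfying $n\le T\le n^2$. Consider a random automaton on $n$ states in which, for each symbol $a\in\Sigma$ independently, the set of $a$-labelled transitions is a uniformly random $T$-element subset of the $n^2$ possible pairs of states. Let $U(n,|\Sigma|,{\it td})$ be the probability that every state has at least one outgoing transition labelled by every symbol of $\Sigma$. Then $U(n,|\Sigma|,{\it td})=\big(\alpha(n,T)/\beta(n,T)\big)^{|\Sigma|}$, where $\beta(n,T)=\binom{n^2}{T}$ and $\alpha(n,T)=\sum_{m=n}^{n^2}\binom{m-n}{T-n}\sum_{i=0}^{n}(-1)^i\binom{n}{i}\binom{m-in-1}{n-1}$.
   Context: Binomial coefficient convention: $\binom{a}{b}=0$ whenever $a<b$ (including negative $a$). This is the Tabakov–Vardi random automaton model with $n$ states, alphabet $\Sigma$ and transition density ${\it td}$. *)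

(* Defs.v *)
From HB Require Import structures.
From mathcomp Require Import all_boot all_order all_algebra.
Set Implicit Arguments. Unset Strict Implicit. Unset Printing Implicit Defensive.
Import Order.TTheory GRing.Theory Num.Theory.

(* Binomial coefficient with integer top: binz a b = 0 whenever a < b,
   in particular whenever a is negative. *)
Definition binz (a : int) (b : nat) : int :=
  match a with Posz k => ('C(k, b))%:Z | Negz _ => 0%R end.

Definition TVspace (n : nat) (Sigma : finType) (T : nat) :
  {set {ffun Sigma -> {set 'I_n * 'I_n}}} :=
  [set f : {ffun Sigma -> {set 'I_n * 'I_n}} | [forall a, #|f a| == T]].

Definition complete_event (n : nat) (Sigma : finType) (T : nat) :
  {set {ffun Sigma -> {set 'I_n * 'I_n}}} :=
  [set f in TVspace n Sigma T |
     [forall a : Sigma, forall q : 'I_n, exists q' : 'I_n, (q, q') \in f a]].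

(* U(n, |Sigma|, td) for T = floor(n td): uniform probability. *)
Definition Uprob (n : nat) (Sigma : finType) (T : nat) : rat :=
  (#|complete_event n Sigma T|%:R / #|TVspace n Sigma T|%:R)%R.

Definition beta_nT (n T : nat) : nat := 'C(n ^ 2, T).

Definition alpha_nT (n T : nat) : int :=
  (\sum_(n <= m < (n ^ 2).+1)
     ('C(m - n, T - n))%:Z *
     \sum_(i < n.+1) (-1) ^+ i * ('C(n, i))%:Z *
        binz (m%:Z - (i * n)%:Z - 1) (n - 1))%R.

(* Main.v *)
Require Import Defs.
From HB Require Import structures.
From mathcomp Require Import all_boot all_order all_algebra.
From mathcomp Require Import ring lra zify.
Import Order.TTheory GRing.Theory Num.Theory.
Set Implicit Arguments. Unset Strict Implicit.
Local Open Scope ring_scope.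

Lemma poly_recr (E : nat -> int) L :
  \poly_(l < L.+1) E l = \poly_(l < L) E l + E L *: 'X^L.
Proof. by rewrite !poly_def big_ord_recr. Qed.

Definition hpol (r L : nat) : {poly int} := \poly_(l < L) ('C(l + r, r))%:R.

Lemma hpol_step r L :
  (1 - 'X) * hpol r.+1 L = hpol r L - ('C(L + r, r.+1))%:R *: 'X^L.
Proof.
elim: L => [|L IH].
  by rewrite /hpol !poly_def !big_ord0 mulr0 expr0 bin_small // scale0r subr0.
rewrite /hpol !poly_recr -/(hpol r.+1 L) -/(hpol r L) mulrDr IH.
rewrite addnS binS mulrnDr exprS -!mul_polyC; ring.
Qed.

Lemma hpol0 L : (1 - 'X) * hpol 0 L = 1 - 'X^L.
Proof.
elim: L => [|L IH]; first by rewrite /hpol poly_def big_ord0 mulr0 expr0 subrr.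
rewrite /hpol poly_recr -/(hpol 0 L) mulrDr IH addn0 bin0 exprS scale1r; ring.
Qed.

Lemma hpol_main r L : exists R0 : {poly int},
  (1 - 'X) ^+ r.+1 * hpol r L = 1 + 'X^L * R0.
Proof.
elim: r => [|r [R0 IH]]; first by exists (-1); rewrite expr1 hpol0; ring.
exists (R0 - ('C(L + r, r.+1))%:R%:P * (1 - 'X) ^+ r.+1).
by rewrite exprSr -mulrA hpol_step mulrBr IH -mul_polyC; ring.
Qed.


Lemma coef_qn n j : (0 < n)%N -> ((hpol 0 n) ^+ n)`_j =
  \sum_(i < n.+1) (-1) ^+ i * (if (j < n * i)%N then 0
        else ('C(j - n * i + n.-1, n.-1))%:R) *+ 'C(n, i).
Proof.
move=> n0; have [R0 IH] := hpol_main n.-1 j.+1.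
rewrite prednK // in IH.
have E : (hpol 0 n) ^+ n * (1 + 'X^(j.+1) * R0) =
   (1 - 'X^n) ^+ n * hpol n.-1 j.+1.
  by rewrite -IH mulrA -exprMn [hpol 0 n * _]mulrC hpol0.
have := congr1 (fun p : {poly int} => p`_j) E.
rewrite mulrDr mulr1 coefD mulrCA coefXnM ltnSn addr0 => ->.
rewrite exprBn big_distrl coef_sum; apply: eq_bigr => i _.
rewrite expr1n mulr1 -exprM.
rewrite /= mulrnAl coefMn -mulrA.
have -> : ((-1) ^+ i : {poly int}) = ((-1) ^+ i)%:P by rewrite rmorphXn rmorphN1.
rewrite coefCM coefXnM; case: ltnP => // H.
rewrite /hpol coef_poly; have -> : (j - n * i < j.+1)%N by rewrite ltnS leq_subr.
done.
Qed.

Lemma compXn (p r : {poly int}) k : (p ^+ k) \Po r = (p \Po r) ^+ k.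
Proof.
elim: k => [|k IH]; first by rewrite !expr0 -polyC1 comp_polyC.
by rewrite !exprS comp_polyM IH.
Qed.

Lemma coefX1 i k : ((('X + 1) ^+ i : {poly int}))`_k = ('C(i, k))%:R.
Proof.
rewrite exprD1n coef_sum.
case: (ltnP k i.+1) => H.
  rewrite (bigD1 (Ordinal H)) //= coefMn coefXn eqxx.
  rewrite big1 ?addr0 //.
  move=> j /eqP Hj; rewrite coefMn coefXn; case: eqP => E; last by rewrite mul0rn.
  by case: Hj; apply: val_inj; rewrite /= E.
rewrite bin_small // big1 // => j _; rewrite coefMn coefXn.
case: eqP => E; last by rewrite mul0rn.
by have := ltn_ord j; rewrite -E ltnNge H.
Qed.

Lemma Q_eq n : ('X + 1) ^+ n - 1 = 'X * (hpol 0 n \Po ('X + 1)) :> {poly int}.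
Proof.
have := congr1 (fun p => p \Po ('X + 1)) (hpol0 n).
rewrite /= comp_polyM !comp_polyB compXn comp_polyX -polyC1 comp_polyC polyC1 => H.
have -> : ('X + 1) ^+ n - 1 = - (1 - ('X + 1) ^+ n) :> {poly int} by ring.
rewrite -H; ring.
Qed.

Lemma coef_main n T : (0 < n)%N -> (n <= T)%N ->
  (((('X + 1) ^+ n - 1) ^+ n : {poly int}))`_T =
  \sum_(j < (n ^ 2).+1 - n) ((hpol 0 n) ^+ n)`_j * ('C(j, T - n))%:R.
Proof.
move=> n0 nT.
rewrite Q_eq exprMn -compXn coefXnM ltnNge nT /= comp_polyE coef_sum.
set p := hpol 0 n ^+ n.
have sp : (size p <= (n ^ 2).+1 - n)%N.
  apply: leq_trans (size_poly_exp_leq _ _) _.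
  have : (size (hpol 0 n) <= n)%N by apply: size_poly.
  move=> h. have h2 : ((size (hpol 0 n)).-1 * n <= n.-1 * n)%N.
    by apply: leq_mul => //; rewrite -!subn1 leq_sub2r.
  have h3 : (n.-1 * n = n ^ 2 - n)%N by rewrite -subn1 mulnBl mul1n mulnn.
  have h4 : (n <= n ^ 2)%N by rewrite -mulnn leq_pmulr.
  lia.
rewrite (eq_bigr (fun i : 'I_(size p) => p`_i * ('C(i, T - n))%:R)); last first.
  by move=> i _; rewrite coefZ coefX1.
rewrite (big_ord_widen _ (fun i => p`_i * ('C(i, T - n))%:R) sp) big_mkcond /=.
apply: eq_bigr => i _; case: ltnP => // H.
by rewrite nth_default // mul0r.
Qed.

Lemma sum_setX (n : nat) :
  \sum_(B : {set 'I_n}) ('X^#|B| : {poly int}) = ('X + 1) ^+ n.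
Proof.
pose h := fun f : {ffun 'I_n -> bool} => [set j | f j].
rewrite (reindex h); last first.
  exists (fun B : {set 'I_n} => [ffun j => j \in B]) => f _.
    by apply/ffunP => j; rewrite ffunE /h inE.
  by apply/setP => j; rewrite /h !inE ffunE.
have E : forall f, ('X^#|h f| : {poly int}) = \prod_(j < n) (if f j then 'X else 1).
  move=> f; rewrite -big_mkcond /= prodr_const; congr (_ ^+ _).
  by apply: eq_card => j; rewrite /h inE.
under eq_bigr do rewrite E.
rewrite -(bigA_distr_bigA (fun (j : 'I_n) (b : bool) => if b then ('X : {poly int}) else 1)).
by rewrite /= big_bool prodr_const card_ord.
Qed.

Definition rowset n (S : {set 'I_n * 'I_n}) (i : 'I_n) := [set j | (i, j) \in S].
Definition gB n (B : {set 'I_n}) : {poly int} := if B == set0 then 0 else 'X^#|B|.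
Definition wS n (S : {set 'I_n * 'I_n}) : {poly int} := \prod_(i < n) gB (rowset S i).

Lemma sum_gB n : \sum_(B : {set 'I_n}) gB B = ('X + 1) ^+ n - 1.
Proof.
rewrite -sum_setX (bigD1 set0) //= [in RHS](bigD1 set0) //= /gB eqxx cards0 expr0.
rewrite add0r addrC addrK; apply: eq_bigr => B /negbTE -> //.
Qed.

Lemma sum_wS n : \sum_(S : {set 'I_n * 'I_n}) wS S = (('X + 1) ^+ n - 1) ^+ n.
Proof.
pose h := fun f : {ffun 'I_n -> {set 'I_n}} => [set p : 'I_n * 'I_n | p.2 \in f p.1].
rewrite (reindex h); last first.
  exists (fun S => [ffun i => rowset S i]) => f _.
    by apply/ffunP => i; rewrite ffunE; apply/setP => j; rewrite /rowset /h !inE.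
  by apply/setP => -[i j]; rewrite /h !inE ffunE /rowset inE.
have E : forall f, wS (h f) = \prod_(i < n) gB (f i).
  move=> f; apply: eq_bigr => i _; congr gB.
  by apply/setP => j; rewrite /rowset /h !inE.
under eq_bigr do rewrite E.
rewrite -(bigA_distr_bigA (fun (i : 'I_n) (B : {set 'I_n}) => gB B)).
by rewrite /= sum_gB prodr_const card_ord.
Qed.

Lemma card_rows n (S : {set 'I_n * 'I_n}) : #|S| = (\sum_(i < n) #|rowset S i|)%N.
Proof.
rewrite -sum1_card big_mkcond /=.
have -> : (\sum_(i < n) #|rowset S i| =
   \sum_(i < n) \sum_(j < n) (if (i, j) \in S then 1 else 0))%N.
  apply: eq_bigr => i _; rewrite -sum1_card big_mkcond /=.
  by apply: eq_bigr => j _; rewrite /rowset inE.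
by rewrite pair_bigA /=; apply: eq_bigr => -[i j].
Qed.

Lemma coef_wS n T (S : {set 'I_n * 'I_n}) :
  (wS S)`_T = if (#|S| == T) && [forall q, exists q', (q, q') \in S] then 1 else 0.
Proof.
case: (boolP [forall q, exists q', (q, q') \in S]) => [/forallP H|H].
  rewrite /wS (eq_bigr (fun i => 'X^#|rowset S i|)); last first.
    move=> i _; rewrite /gB; case: eqP => // E.
    have /existsP [j Hj] := H i.
    by have := in_set0 j; rewrite -E /rowset inE Hj.
  rewrite -(big_morph (fun k => ('X^k : {poly int})) (fun a b => exprD 'X a b) (expr0 'X)).
  by rewrite -card_rows coefXn eq_sym andbT; case: eqP.
rewrite andbF /wS.
move/forallPn: H => [i /existsPn Hi].
rewrite (bigD1 i) //= /gB.
have -> : rowset S i == set0.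
  by apply/eqP/setP => j; rewrite /rowset !inE (negbTE (Hi j)).
by rewrite mul0r coef0.
Qed.

Definition Cset n (T : nat) : {set {set 'I_n * 'I_n}} :=
  [set S : {set 'I_n * 'I_n} | (#|S| == T) && [forall q, exists q', (q, q') \in S]].

Lemma card_Cset n (T : nat) : (#|Cset n T|)%:R = ((('X + 1) ^+ n - 1) ^+ n : {poly int})`_T.
Proof.
rewrite -sum_wS coef_sum (eq_bigr _ (fun (S : {set 'I_n * 'I_n}) _ => coef_wS T S)).
rewrite -big_mkcond sumr_const; congr (_ *+ _).
by apply: eq_card => S; rewrite inE.
Qed.

Lemma binz_eq n i j : (0 < n)%N ->
  binz ((j + n)%:Z - (i * n)%:Z - 1) (n - 1) =
  if (j < n * i)%N then 0 else ('C(j - n * i + n.-1, n.-1))%:Z.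
Proof.
move=> n0; rewrite subn1 mulnC.
case: ltnP => H.
  case E: ((j + n)%:Z - (n * i)%:Z - 1) => [k|k] //=.
  rewrite bin_small //; lia.
have -> : (j + n)%:Z - (n * i)%:Z - 1 = (j - n * i + n.-1)%:Z by lia.
done.
Qed.

Lemma alpha_eq n T : (0 < n)%N -> (n <= T)%N ->
  alpha_nT n T = (((('X + 1) ^+ n - 1) ^+ n : {poly int}))`_T.
Proof.
move=> n0 nT; rewrite coef_main // /alpha_nT.
rewrite -{1}(add0n n) big_addn big_mkord.
apply: eq_bigr => j _; rewrite addnK mulrC coef_qn //.
rewrite natz; congr (_ * _); apply: eq_bigr => i _.
by rewrite binz_eq // -mulr_natr !natz; ring.
Qed.

Unset Implicit Arguments.
Local Close Scope ring_scope.

Theorem theorem9p1 (R : archiRealFieldType) (n : nat) (Sigma : finType)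
  (td : R) (T : nat) :
  (1 <= n)%N -> (0 < td)%R ->
  Num.floor (n%:R * td)%R = Posz T ->
  (n <= T)%N -> (T <= n ^ 2)%N ->
  Uprob n Sigma T =
    (((alpha_nT n T)%:~R / (beta_nT n T)%:R) ^+ #|Sigma|)%R.
Proof.
move=> n0 _ _ nT Tn.
have cTV : #|TVspace n Sigma T| =
    (#|[set A : {set 'I_n * 'I_n} | #|A| == T]| ^ #|Sigma|)%N.
  rewrite -card_ffun_on; apply: eq_card => f.
  rewrite /TVspace inE; apply/forallP/ffun_onP => H a.
    by rewrite inE; apply: H.
  by have := H a; rewrite inE.
have cCE : #|complete_event n Sigma T| = (#|Cset n T| ^ #|Sigma|)%N.
  rewrite -card_ffun_on; apply: eq_card => f.
  rewrite /complete_event /TVspace !inE.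
  apply/andP/ffun_onP => [[/forallP H1 /forallP H2] a|H].
    by rewrite inE H1; apply: H2.
  split; apply/forallP => a; have := H a; rewrite inE => /andP[] //.
rewrite card_draws card_prod card_ord mulnn in cTV.
rewrite /Uprob cTV cCE !natrX -expr_div_n /beta_nT.
by rewrite alpha_eq // -card_Cset natz.
Qed.
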